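(* Under the standing setting and Assumptions (A1), (A2), (A3) described in the context, for every $T>0$, $$\lim_{\epsilon\to 0}\ \sup_{0\le t\le T}|X(t)-\bar X^{\rm c}(t)|=0\quad\text{almost surely.}$$
   Context: Setting. Let $(\Omega,\mathcal F,P)$ be a complete probability space, $\epsilon_0>0$ fixed and $\epsilon\in(0,\epsilon_0)$ a small parameter. Consider the discrete-time system $$X_{k+1}=X_k+\epsilon f(X_k,Y_{k+1}),\quad k=0,1,2,\dots,\qquad X_0=x\in\mathbb R^n \text{ (deterministic)},$$ where $\{Y_k\}$ is an $\mathbb R^m$-valued stochastic sequence with state space $S_Y\subset\mathbb R^m$, and $f:\mathbb R^n\times\mathbb R^m\to\mathbb R^n$. (A1) $f(x,y)$ is continuous in $(x,y)$; for each $x$, $y\mapsto f(x,y)$ is bounded; and $f$ is locally Lipschitz in $x$ uniformly in $y$: for every compact $D\subset\mathbb R^n$ there is $k_D$ with $|f(x_1,y)-f(x_2,y)|\le k_D|x_1-x_2|$ for all $x_1,x_2\in D$, $y\in S_Y$. (A2) $\{Y_k\}$ is ergodic with invariant distribution $\mu$, in the sense that for each $x$, $\bar f(x):=\int_{S_Y}f(x,y)\mu(dy)=\lim_{N\to\infty}\frac1{N+1}\sum_{k=0}^N f(x,Y_{k+1})$ almost surely. Average systems: the discrete average system $\bar X^{\rm d}_{k+1}=\bar X^{\rm d}_k+\epsilon\bar f(\bar X^{\rm d}_k)$, and the continuous average system $\frac{d}{dt}\bar X^{\rm c}(t)=\bar f(\bar X^{\rm c}(t))$, both with initial value $\bar X^{\rm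 d}_0=\bar X^{\rm c}(0)=X_0=x$. (A3) The continuous average system has a solution on $[0,\infty)$. Continuous-time versions: with $t_k=\epsilon k$, define the piecewise constant processes $X(t)=X_k$ and $\bar X^{\rm d}(t)=\bar X^{\rm d}_k$ for $t_k\le t<t_{k+1}$ (these depend on $\epsilon$). *)

(* Defs.v *)
From Stdlib Require Import Reals.
From mathcomp Require Import all_boot.
Set Implicit Arguments.
Open Scope R_scope.

Definition Vec (n : nat) := 'I_n -> R.
Definition vzero {n : nat} : Vec n := fun _ => 0.
Definition vadd {n : nat} (u v : Vec n) : Vec n := fun i => u i + v i.
Definition vsub {n : nat} (u v : Vec n) : Vec n := fun i => u i - v i.
Definition vscale {n : nat} (c : R) (v : Vec n) : Vec n := fun i => c * v i.
Definition sqnorm {n : nat} (v : Vec n) : R :=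
  foldr (fun i acc => v i * v i + acc) 0 (enum 'I_n).
Definition vnorm {n : nat} (v : Vec n) : R := sqrt (sqnorm v).

Fixpoint vsum {n : nat} (g : nat -> Vec n) (N : nat) : Vec n :=
  match N with
  | O => vzero
  | S N' => vadd (vsum g N') (g N')
  end.

Definition vconv {n : nat} (u : nat -> Vec n) (l : Vec n) : Prop :=
  forall e, 0 < e -> exists N0 : nat, forall N : nat, (N0 <= N)%nat ->
    vnorm (vsub (u N) l) < e.

Definition ergavg {n m : nat} (f : Vec n -> Vec m -> Vec n) (Y : nat -> Vec m)
  (x : Vec n) (N : nat) : Vec n :=
  vscale (/ INR (N + 1)) (vsum (fun k => f x (Y (k + 1)%nat)) (N + 1)).

Fixpoint Xseq {n m : nat} (f : Vec n -> Vec m -> Vec n) (Y : nat -> Vec m)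
  (eps : R) (x : Vec n) (k : nat) : Vec n :=
  match k with
  | O => x
  | S k' => let p := Xseq f Y eps x k' in vadd p (vscale eps (f p (Y (S k'))))
  end.

(* Piecewise constant interpolation X(t) = X_k for eps k <= t < eps (k+1);
   Int_part is the floor function. *)
Definition Xcont {n m : nat} (f : Vec n -> Vec m -> Vec n) (Y : nat -> Vec m)
  (eps : R) (x : Vec n) (t : R) : Vec n :=
  Xseq f Y eps x (Z.to_nat (Int_part (t / eps))).

(* Null sets of a complete probability space, abstracted as a proper
   sigma-ideal: closed under subsets (completeness) and countable unions,
   and the whole space is not null. *)
Definition null_ideal {Omega : Type} (null : (Omega -> Prop) -> Prop) : Prop :=
  (forall A B : Omega -> Prop, null B -> (forall w, A w -> B w) -> null A) /\
  (forall A : nat -> Omega -> Prop, (forall k, null (A k)) ->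
      null (fun w => exists k, A k w)) /\
  ~ null (fun _ => True).

Definition almost_surely {Omega : Type} (null : (Omega -> Prop) -> Prop)
  (Q : Omega -> Prop) : Prop :=
  exists N : Omega -> Prop, null N /\ forall w, ~ N w -> Q w.

(* Main.v *)
Require Import Defs.
From Stdlib Require Import Reals.
From Stdlib Require Import Lra Lia ZArith FunctionalExtensionality Classical.
From mathcomp Require Import all_boot.
Open Scope R_scope.

Definition sl {n} (l : seq 'I_n) (v : Vec n) : R :=
  foldr (fun i acc => Rabs (v i) + acc) 0 l.
Definition snorm {n} (v : Vec n) := sl (enum 'I_n) v.

Lemma sl_ge0 {n} (l : seq 'I_n) v : 0 <= sl l v.
Proof. elim: l => [|a l IH] /=; [lra| have := Rabs_pos (v a); lra]. Qed.

Lemma sl_mono2 {n} (l : seq 'I_n) (u v w : Vec n) a b : 0 <= a -> 0 <= b ->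
  (forall i, Rabs (u i) <= a * Rabs (v i) + b * Rabs (w i)) ->
  sl l u <= a * sl l v + b * sl l w.
Proof.
move=> ha hb H; elim: l => [|i l IH] /=; first lra.
have := H i; rewrite !Rmult_plus_distr_l; lra.
Qed.

Lemma sl_bound {n} (l : seq 'I_n) (u : Vec n) C :
  (forall i, Rabs (u i) <= C) -> sl l u <= INR (size l) * C.
Proof.
move=> H; elim: l => [|i l IH]; first (simpl; lra).
change (Rabs (u i) + sl l u <= INR (size l).+1 * C).
rewrite S_INR; have := H i; lra.
Qed.

Lemma sl_in {n} (l : seq 'I_n) (u : Vec n) i : i \in l -> Rabs (u i) <= sl l u.
Proof.
elim: l => [|a l IH] //=; rewrite in_cons => /orP [/eqP ->|h].
  have := sl_ge0 l u; lra.
have := IH h; have := Rabs_pos (u a); lra.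
Qed.

Lemma sq_in {n} (l : seq 'I_n) (u : Vec n) i : i \in l ->
  u i * u i <= foldr (fun i acc => u i * u i + acc) 0 l.
Proof.
have pos : forall l : seq 'I_n, 0 <= foldr (fun i acc => u i * u i + acc) 0 l.
  elim=> [|a l' IH] /=; [lra| have := Rle_0_sqr (u a); rewrite /Rsqr; lra].
elim: l => [|a l IH] //=; rewrite in_cons => /orP [/eqP ->|h].
  have := pos l; lra.
have := IH h; have := Rle_0_sqr (u a); rewrite /Rsqr; lra.
Qed.

Lemma sq_sl {n} (l : seq 'I_n) (u : Vec n) :
  foldr (fun i acc => u i * u i + acc) 0 l <= sl l u * sl l u.
Proof.
elim: l => [|a l IH] /=; first lra.
have h1 := sl_ge0 l u; have h2 := Rabs_pos (u a).
have h3 : u a * u a = Rabs (u a) * Rabs (u a).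
  by rewrite -Rabs_mult Rabs_right //; have := Rle_0_sqr (u a); rewrite /Rsqr; lra.
rewrite h3; nra.
Qed.

Lemma vnorm_le_snorm {n} (v : Vec n) : vnorm v <= snorm v.
Proof.
rewrite /vnorm /sqnorm /snorm.
have h := sq_sl (enum 'I_n) v.
rewrite -(sqrt_square (sl (enum 'I_n) v)); last exact: sl_ge0.
exact: sqrt_le_1_alt.
Qed.

Lemma coord_le_vnorm {n} (v : Vec n) i : Rabs (v i) <= vnorm v.
Proof.
rewrite /vnorm /sqnorm -sqrt_Rsqr_abs; apply: sqrt_le_1_alt.
rewrite /Rsqr; apply: sq_in; by rewrite mem_enum.
Qed.

Lemma coord_le_snorm {n} (v : Vec n) i : Rabs (v i) <= snorm v.
Proof. apply: sl_in; by rewrite mem_enum. Qed.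

Lemma snorm_le_vnorm {n} (v : Vec n) : snorm v <= INR n * vnorm v.
Proof.
have h := sl_bound (enum 'I_n) v (vnorm v) (fun i => coord_le_vnorm v i).
by rewrite size_enum_ord in h.
Qed.

Lemma snorm_ge0 {n} (v : Vec n) : 0 <= snorm v.
Proof. exact: sl_ge0. Qed.

Lemma snorm_mono2 {n} (u v w : Vec n) a b : 0 <= a -> 0 <= b ->
  (forall i, Rabs (u i) <= a * Rabs (v i) + b * Rabs (w i)) ->
  snorm u <= a * snorm v + b * snorm w.
Proof. exact: sl_mono2. Qed.

Lemma snorm_tri {n} (u v w : Vec n) :
  (forall i, Rabs (u i) <= Rabs (v i) + Rabs (w i)) -> snorm u <= snorm v + snorm w.
Proof.
move=> H; have := @snorm_mono2 n u v w 1 1; rewrite !Rmult_1_l; apply; try lra.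
by move=> i; rewrite !Rmult_1_l.
Qed.

Lemma snorm_scale {n} (u v : Vec n) a : (forall i, Rabs (u i) <= a * Rabs (v i)) ->
  0 <= a -> snorm u <= a * snorm v.
Proof.
move=> H ha; have := @snorm_mono2 n u v v a 0; rewrite Rmult_0_l Rplus_0_r; apply => //; try lra.
by move=> i; rewrite Rmult_0_l Rplus_0_r.
Qed.

Lemma snorm_bound {n} (u : Vec n) C : (forall i, Rabs (u i) <= C) -> snorm u <= INR n * C.
Proof. move=> H; have h := sl_bound (enum 'I_n) u C H; by rewrite size_enum_ord in h. Qed.

Lemma snorm_sub_tri {n} (a b c : Vec n) : snorm (vsub a c) <= snorm (vsub a b) + snorm (vsub b c).
Proof.
apply: snorm_tri => i; rewrite /vsub.
replace (a i - c i) with ((a i - b i) + (b i - c i)) by ring; exact: Rabs_triang.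
Qed.

Lemma snorm_sub_sym {n} (a b : Vec n) : snorm (vsub a b) = snorm (vsub b a).
Proof.
rewrite /snorm; elim: (enum 'I_n) => [|i l IH] //=; rewrite IH /vsub Rabs_minus_sym //.
Qed.

Lemma snorm_zero {n} : snorm (@vzero n) = 0.
Proof. rewrite /snorm; elim: (enum 'I_n) => [|i l IH] //=; rewrite IH /vzero Rabs_R0; lra. Qed.

Lemma vsum_coord {n} (g : nat -> Vec n) N i : vsum g N.+1 i = vsum g N i + g N i.
Proof. by []. Qed.

Lemma vsum_bound {n} (g : nat -> Vec n) N C : (forall k, (k < N)%nat -> snorm (g k) <= C) ->
  snorm (vsum g N) <= INR N * C.
Proof.
elim: N => [|N IH] H.
  simpl; rewrite snorm_zero; lra.
rewrite S_INR /=.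
have h1 := IH (fun k hk => H k (ltnW hk)).
have h2 := H N (ltnSn N).
have := @snorm_tri n (vadd (vsum g N) (g N)) (vsum g N) (g N).
have : forall i, Rabs (vadd (vsum g N) (g N) i) <= Rabs (vsum g N i) + Rabs (g N i).
  move=> i; exact: Rabs_triang.
move=> h3 h4; have := h4 h3; lra.
Qed.

Lemma null_union2 {Omega : Type} (null : (Omega -> Prop) -> Prop) :
  null_ideal null -> forall A B, null A -> null B -> null (fun w => A w \/ B w).
Proof.
move=> [Hsub [Hun _]] A B hA hB.
apply (Hsub _ (fun w => exists k, (if k is 0%nat then A else B) w)).
  by apply Hun => -[|k].
by move=> w [h|h]; [exists 0%nat | exists 1%nat].
Qed.

Lemma exists_not_null {Omega : Type} (null : (Omega -> Prop) -> Prop) N :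
  null_ideal null -> null N -> exists w, ~ N w.
Proof.
move=> [Hsub [_ Hnt]] hN; apply NNPP => H; apply Hnt.
apply (Hsub _ N hN) => w _; apply NNPP => h; apply H; by exists w.
Qed.

Lemma vsum_sub_coord {n} (a b : nat -> Vec n) N i :
  vsum (fun k => vsub (a k) (b k)) N i = vsum a N i - vsum b N i.
Proof.
elim: N => [|N IH]; first (rewrite /= /vzero; ring).
by rewrite !vsum_coord IH /vsub; ring.
Qed.

Lemma vsum_const_coord {n} (a : nat -> Vec n) (c : Vec n) N i :
  vsum (fun k => vsub (a k) c) N i = vsum a N i - INR N * c i.
Proof.
elim: N => [|N IH]; first (rewrite /= /vzero; ring).
by rewrite !vsum_coord IH /vsub S_INR; ring.
Qed.

Lemma lip_f {n m} (f : Vec n -> Vec m -> Vec n) (SY : Vec m -> Prop)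
  (Hlip : forall r, exists kD, forall (x1 x2 : Vec n) (y : Vec m),
     vnorm x1 <= r -> vnorm x2 <= r -> SY y ->
     vnorm (vsub (f x1 y) (f x2 y)) <= kD * vnorm (vsub x1 x2)) :
  forall r, exists L, 0 < L /\ forall z1 z2 y, snorm z1 <= r -> snorm z2 <= r -> SY y ->
    snorm (vsub (f z1 y) (f z2 y)) <= L * snorm (vsub z1 z2).
Proof.
move=> r; have [kD HkD] := Hlip r.
exists (INR n * Rabs kD + 1); split.
  have := pos_INR n; have := Rabs_pos kD; nra.
move=> z1 z2 y h1 h2 hy.
have e1 := HkD z1 z2 y (Rle_trans _ _ _ (vnorm_le_snorm z1) h1)
   (Rle_trans _ _ _ (vnorm_le_snorm z2) h2) hy.
have e2 := snorm_le_vnorm (vsub (f z1 y) (f z2 y)).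
have e3 := vnorm_le_snorm (vsub z1 z2).
have e4 : 0 <= vnorm (vsub z1 z2) by apply sqrt_pos.
have e5 : kD * vnorm (vsub z1 z2) <= Rabs kD * snorm (vsub z1 z2).
  have := Rle_abs kD; have := Rabs_pos kD; nra.
have := pos_INR n; have := snorm_ge0 (vsub z1 z2); nra.
Qed.

Lemma ergavg_diff {n m} (f : Vec n -> Vec m -> Vec n) (SY : Vec m -> Prop) (Yw : nat -> Vec m)
  (HY : forall k, SY (Yw k)) L z1 z2 N :
  (forall y, SY y -> snorm (vsub (f z1 y) (f z2 y)) <= L * snorm (vsub z1 z2)) ->
  snorm (vsub (ergavg f Yw z1 N) (ergavg f Yw z2 N)) <= L * snorm (vsub z1 z2).
Proof.
move=> H.
have hpos : 0 < INR (N + 1) by apply lt_0_INR; rewrite addn1; apply/leP.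
set c := / INR (N + 1).
have hc : 0 < c by apply Rinv_0_lt_compat.
set D := vsum (fun k => vsub (f z1 (Yw (k + 1)%nat)) (f z2 (Yw (k + 1)%nat))) (N + 1).
have h1 : snorm (vsub (ergavg f Yw z1 N) (ergavg f Yw z2 N)) <= c * snorm D.
  apply: snorm_scale; last lra.
  move=> i; rewrite /ergavg /vsub /vscale /D vsum_sub_coord.
  rewrite -Rmult_minus_distr_l Rabs_mult (Rabs_right c); [lra|lra].
have h2 : snorm D <= INR (N + 1) * (L * snorm (vsub z1 z2)).
  apply: vsum_bound => k _; exact: H.
have : c * snorm D <= c * (INR (N + 1) * (L * snorm (vsub z1 z2))).
  apply Rmult_le_compat_l; lra.
have -> : c * (INR (N + 1) * (L * snorm (vsub z1 z2))) = L * snorm (vsub z1 z2).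
  rewrite /c; field; lra.
lra.
Qed.

Lemma vconv_snorm {n} (u : nat -> Vec n) l : vconv u l ->
  forall e, 0 < e -> exists N0 : nat, forall N, (N0 <= N)%nat -> snorm (vsub (u N) l) <= e.
Proof.
move=> H e he.
have hn : 0 < INR n + 1 by have := pos_INR n; lra.
have [N0 HN] := H (e / (INR n + 1)) (Rdiv_lt_0_compat _ _ he hn).
exists N0 => N hN; have := HN N hN; have := snorm_le_vnorm (vsub (u N) l).
have := pos_INR n; have : 0 <= vnorm (vsub (u N) l) by apply sqrt_pos.
move=> a b c d.
have : INR n * vnorm (vsub (u N) l) <= (INR n + 1) * (e / (INR n + 1)).
  apply Rmult_le_compat; lra.
have -> : (INR n + 1) * (e / (INR n + 1)) = e by field; lra.
lra.
Qed.

Lemma lip_fbar {Omega : Type} (null : (Omega -> Prop) -> Prop) (Hnull : null_ideal null)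
  {n m} (f : Vec n -> Vec m -> Vec n) (SY : Vec m -> Prop) (Y : Omega -> nat -> Vec m)
  (fbar : Vec n -> Vec n) (HY : forall w k, SY (Y w k))
  (Herg : forall x0 : Vec n,
     almost_surely null (fun w => vconv (ergavg f (Y w) x0) (fbar x0))) L z1 z2 :
  (forall y, SY y -> snorm (vsub (f z1 y) (f z2 y)) <= L * snorm (vsub z1 z2)) ->
  snorm (vsub (fbar z1) (fbar z2)) <= L * snorm (vsub z1 z2).
Proof.
move=> H.
have [N1 [hN1 H1]] := Herg z1; have [N2 [hN2 H2]] := Herg z2.
have [w hw] := exists_not_null null _ Hnull (null_union2 null Hnull _ _ hN1 hN2).
have c1 := H1 w (fun h => hw (or_introl h)).
have c2 := H2 w (fun h => hw (or_intror h)).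
apply le_epsilon => e he.
have [M1 HM1] := vconv_snorm _ _ c1 (e/2) ltac:(lra).
have [M2 HM2] := vconv_snorm _ _ c2 (e/2) ltac:(lra).
set N := maxn M1 M2.
have d1 := HM1 N (leq_maxl _ _).
have d2 := HM2 N (leq_maxr _ _).
have d3 := @ergavg_diff _ _ f SY (Y w) (HY w) _ _ _ N H.
have t1 := snorm_sub_tri (fbar z1) (ergavg f (Y w) z1 N) (fbar z2).
have t2 := snorm_sub_tri (ergavg f (Y w) z1 N) (ergavg f (Y w) z2 N) (fbar z2).
rewrite snorm_sub_sym in d1.
lra.
Qed.

Lemma cont_of_der (g : R -> R) a l : derivable_pt_lim g a l ->
  forall e, 0 < e -> exists d, 0 < d /\ forall s, Rabs (s - a) < d -> Rabs (g s - g a) < e.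
Proof.
move=> hd e he.
have hc := derivable_continuous_pt g a (exist _ l hd).
have [alp [ha H]] := hc e he.
exists alp; split => // s hs.
case: (Req_dec s a) => [->|hne]; first by rewrite Rminus_diag Rabs_R0.
have := H s; rewrite /= /R_dist; apply; split => //; split => //; auto.
Qed.

Lemma xc_rcont {n} (fbar : Vec n -> Vec n) (x : Vec n) (Xc : R -> Vec n)
  (HXc0 : Xc 0 = x)
  (HXc0cont : forall e, 0 < e -> exists d, 0 < d /\
     forall t, 0 <= t < d -> vnorm (vsub (Xc t) x) < e)
  (HXcder : forall t, 0 < t -> forall i : 'I_n,
     derivable_pt_lim (fun s => Xc s i) t (fbar (Xc t) i)) :
  forall i a, 0 <= a -> forall e, 0 < e -> exists d, 0 < d /\
    forall s, 0 <= s -> Rabs (s - a) < d -> Rabs (Xc s i - Xc a i) < e.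
Proof.
move=> i a ha e he.
case: (Rle_lt_or_eq_dec _ _ ha) => [hpos|<-].
  have [d [hd H]] := cont_of_der _ _ _ (HXcder a hpos i) e he.
  by exists d; split => // s _ hs; apply H.
have [d [hd H]] := HXc0cont e he.
exists d; split => // s hs hsd.
rewrite HXc0.
have h : Rabs (Xc s i - x i) <= vnorm (vsub (Xc s) x) := coord_le_vnorm (vsub (Xc s) x) i.
have := H s; rewrite Rminus_0_r Rabs_right in hsd; last lra.
move=> h2; have := h2 (conj hs hsd); lra.
Qed.

Lemma mvt_bound (g g' : R -> R) a b M : a <= b ->
  (forall c, a < c <= b -> derivable_pt_lim g c (g' c)) ->
  (forall c, a < c <= b -> Rabs (g' c) <= M) ->
  (forall e, 0 < e -> exists d, 0 < d /\ forall s, a < s < a + d -> Rabs (g s - g a) < e) ->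
  Rabs (g b - g a) <= M * (b - a).
Proof.
move=> hab Hd Hb Hc.
case: (Rle_lt_or_eq_dec _ _ hab) => [hlt|<-]; last first.
  rewrite Rminus_diag Rabs_R0; lra.
have hM : 0 <= M by have := Hb b (conj hlt (Rle_refl b)); have := Rabs_pos (g' b); lra.
apply le_epsilon => e he.
have [d [hd H]] := Hc e he.
set a' := a + Rmin d (b - a) / 2.
have hm1 := Rmin_l d (b - a); have hm2 := Rmin_r d (b - a).
have hm3 : 0 < Rmin d (b - a) by apply Rmin_pos; lra.
have ha1 : a < a' by rewrite /a'; lra.
have ha2 : a' < b by rewrite /a'; lra.
have ha3 : a' < a + d by rewrite /a'; lra.
have [c [hc1 hc2]] := MVT_cor2 g g' a' b ha2 (fun c hc => Hd c ltac:(lra)).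
have h1 := H a' (conj ha1 ha3).
have h2 : Rabs (g b - g a') <= M * (b - a).
  rewrite hc1 Rabs_mult (Rabs_right (b - a')); last lra.
  have := Hb c ltac:(lra); have := Rabs_pos (g' c); nra.
have := Rabs_triang (g b - g a') (g a' - g a).
have -> : g b - g a' + (g a' - g a) = g b - g a by ring.
lra.
Qed.

Lemma fin_sup {n} (P : 'I_n -> R -> Prop) :
  (forall i B B', P i B -> B <= B' -> P i B') -> (forall i, exists B, P i B) ->
  exists B, forall i, P i B.
Proof.
move=> Hm Hex.
suff : forall l : seq 'I_n, exists B, forall i, i \in l -> P i B.
  move=> /(_ (enum 'I_n)) [B HB]; exists B => i; apply HB; by rewrite mem_enum.
elim=> [|a l [Bl HBl]]; first by exists 0.
have [Ba HBa] := Hex a.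
exists (Rmax Ba Bl) => i; rewrite in_cons => /orP [/eqP ->|h].
  apply: Hm HBa _; exact: Rmax_l.
apply: Hm (HBl i h) _; exact: Rmax_r.
Qed.

Lemma xc_bounded {n} (Xc : R -> Vec n)
  (Hrc : forall i a, 0 <= a -> forall e, 0 < e -> exists d, 0 < d /\
    forall s, 0 <= s -> Rabs (s - a) < d -> Rabs (Xc s i - Xc a i) < e) :
  forall U, 0 <= U -> exists B, 0 <= B /\ forall s, 0 <= s <= U -> snorm (Xc s) <= B.
Proof.
move=> U hU.
have Hi : forall i, exists B, forall s, 0 <= s <= U -> Rabs (Xc s i) <= B.
  move=> i.
  pose h := fun s => Xc (Rmax 0 s) i.
  have hcont : forall c, 0 <= c <= U -> continuity_pt h c.
    move=> c hc e he.
    have [d [hd H]] := Hrc i c (proj1 hc) e he.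
    exists d; split => // s [_ hs]; rewrite /= /R_dist in hs *.
    rewrite /h (Rmax_right 0 c); last lra.
    case: (Rle_dec 0 s) => h0.
      rewrite Rmax_right //; apply H => //.
    rewrite Rmax_left; last lra.
    apply H; first lra.
    rewrite Rminus_0_l Rabs_Ropp Rabs_right; last lra.
    rewrite Rabs_left in hs; lra.
  have [M1 [HM1 _]] := continuity_ab_maj h 0 U hU hcont.
  have hcont' : forall c, 0 <= c <= U -> continuity_pt (fun s => - h s) c.
    move=> c hc; apply (continuity_pt_opp h); exact: hcont.
  have [M2 [HM2 _]] := continuity_ab_maj (fun s => - h s) 0 U hU hcont'.
  exists (Rabs (h M1) + Rabs (h M2)) => s hs.
  have e1 := HM1 s hs; have e2 := HM2 s hs.
  have : h s = Xc s i by rewrite /h Rmax_right; lra.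
  move=> <-.
  have a1 := Rle_abs (h M1); have a2 := Rabs_pos (h M2); have a3 := Rle_abs (- h M2).
  have a4 := Rabs_pos (h M1).
  rewrite Rabs_Ropp in a3.
  apply Rabs_le; split; lra.
have [B HB] := fin_sup (fun i B => forall s, 0 <= s <= U -> Rabs (Xc s i) <= B)
   (fun i B B' H hle s hs => Rle_trans _ _ _ (H s hs) hle) Hi.
exists (INR n * Rmax 0 B); split.
  apply Rmult_le_pos; [apply pos_INR|apply Rmax_l].
move=> s hs; apply snorm_bound => i; apply: Rle_trans (HB i s hs) _; apply Rmax_r.
Qed.

Lemma xc_lip {n} (fbar : Vec n -> Vec n) (Xc : R -> Vec n)
  (Hrc : forall i a, 0 <= a -> forall e, 0 < e -> exists d, 0 < d /\
    forall s, 0 <= s -> Rabs (s - a) < d -> Rabs (Xc s i - Xc a i) < e)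
  (HXcder : forall t, 0 < t -> forall i : 'I_n,
     derivable_pt_lim (fun s => Xc s i) t (fbar (Xc t) i)) U Fb :
  (forall c, 0 < c <= U -> snorm (fbar (Xc c)) <= Fb) ->
  forall s t, 0 <= s -> s <= t -> t <= U ->
  snorm (vsub (Xc t) (Xc s)) <= INR n * Fb * (t - s).
Proof.
move=> HF s t hs hst htU.
rewrite Rmult_assoc; apply snorm_bound => i; rewrite /vsub.
apply: (mvt_bound (fun u => Xc u i) (fun c => fbar (Xc c) i)) => //.
- move=> c hc; apply HXcder; lra.
- move=> c hc; apply: Rle_trans (coord_le_snorm _ i) _; apply HF; lra.
- move=> e he; have [d [hd H]] := Hrc i s hs e he.
  exists d; split => // u hu; apply H; first lra.
  rewrite Rabs_right; lra.
Qed.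

Lemma xc_step {n} (fbar : Vec n -> Vec n) (Xc : R -> Vec n)
  (Hrc : forall i a, 0 <= a -> forall e, 0 < e -> exists d, 0 < d /\
    forall s, 0 <= s -> Rabs (s - a) < d -> Rabs (Xc s i - Xc a i) < e)
  (HXcder : forall t, 0 < t -> forall i : 'I_n,
     derivable_pt_lim (fun s => Xc s i) t (fbar (Xc t) i)) s h Q :
  0 <= s -> 0 < h ->
  (forall c, s < c <= s + h -> snorm (vsub (fbar (Xc c)) (fbar (Xc s))) <= Q) ->
  snorm (vsub (vsub (Xc (s + h)) (Xc s)) (vscale h (fbar (Xc s)))) <= INR n * (Q * h).
Proof.
move=> hs hh HQ.
apply snorm_bound => i; rewrite /vsub /vscale.
set C := fbar (Xc s) i.
have -> : Xc (s + h) i - Xc s i - h * C =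
  (Xc (s + h) i - C * (s + h)) - (Xc s i - C * s) by ring.
have -> : Q * h = Q * (s + h - s) by ring.
apply: (mvt_bound (fun u => Xc u i - C * u) (fun c => fbar (Xc c) i - C * 1)); first lra.
- move=> c hc.
  exact: (derivable_pt_lim_minus (fun u => Xc u i) (mult_real_fct C id) c _ _
     (HXcder c ltac:(lra) i) (derivable_pt_lim_scal id C c 1 (derivable_pt_lim_id c))).
- move=> c hc; rewrite Rmult_1_r.
  apply: Rle_trans _ (HQ c hc).
  exact: (coord_le_snorm (vsub (fbar (Xc c)) (fbar (Xc s))) i).
- move=> e he.
  have [d1 [hd1 H]] := Hrc i s hs (e / 2) ltac:(lra).
  have hC := Rabs_pos C.
  set d2 := e / (2 * (Rabs C + 1)).
  have hd2 : 0 < d2 by apply Rdiv_lt_0_compat; lra.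
  exists (Rmin d1 d2); split; first by apply Rmin_pos.
  move=> u hu.
  have hm1 := Rmin_l d1 d2; have hm2 := Rmin_r d1 d2.
  have h1 := H u ltac:(lra) ltac:(rewrite Rabs_right; lra).
  have -> : Xc u i - C * u - (Xc s i - C * s) = (Xc u i - Xc s i) + (- (C * (u - s))) by ring.
  apply: Rle_lt_trans (Rabs_triang _ _) _.
  rewrite Rabs_Ropp Rabs_mult (Rabs_right (u - s)); last lra.
  have : Rabs C * (u - s) <= Rabs C * d2 by apply Rmult_le_compat_l; lra.
  have : Rabs C * d2 < e / 2.
    rewrite /d2; apply (Rmult_lt_reg_r (2 * (Rabs C + 1))); first lra.
    field_simplify; try lra.
  lra.
Qed.

Definition fl (r : R) : nat := Z.to_nat (Int_part r).

Lemma fl_spec r : 0 <= r -> INR (fl r) <= r < INR (fl r) + 1.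
Proof.
move=> hr; have [h1 h2] := base_Int_part r.
have hz : (0 <= Int_part r)%Z.
  have : (-1 < Int_part r)%Z by apply lt_IZR; lra.
  lia.
rewrite /fl INR_IZR_INZ Z2Nat.id //; lra.
Qed.

Lemma fl_mono r s : 0 <= r -> r <= s -> (fl r <= fl s)%N.
Proof.
move=> hr hrs; have [a1 a2] := fl_spec r hr; have [b1 b2] := fl_spec s ltac:(lra).
have : INR (fl r) < INR (fl s + 1)%coq_nat by rewrite plus_INR /=; lra.
move/INR_lt => h; apply/leP; lia.
Qed.

Lemma fin_min (P : nat -> R -> Prop) :
  (forall j d d', P j d -> 0 < d' <= d -> P j d') ->
  (forall j, exists d, 0 < d /\ P j d) ->
  forall J, exists d, 0 < d /\ forall j, (j <= J)%N -> P j d.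
Proof.
move=> Hm Hex; elim=> [|J [d [hd Hd]]].
  have [d [hd Hd]] := Hex 0%N; exists d; split => // j; rewrite leqn0 => /eqP ->; done.
have [d' [hd' Hd']] := Hex J.+1.
exists (Rmin d d'); split; first by apply Rmin_pos.
move=> j; rewrite leq_eqVlt => /orP [/eqP ->|hj].
  apply: Hm Hd' _; split; [by apply Rmin_pos| apply Rmin_r].
apply: Hm (Hd j hj) _; split; [by apply Rmin_pos| apply Rmin_l].
Qed.

Lemma snorm_sub_le {n} (a b : Vec n) : snorm (vsub a b) <= snorm a + snorm b.
Proof.
apply snorm_tri => i; rewrite /vsub.
have := Rabs_triang (a i) (- b i); rewrite Rabs_Ropp; done.
Qed.

Lemma snorm_vscale {n} (v : Vec n) c : 0 <= c -> snorm (vscale c v) <= c * snorm v.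
Proof.
move=> hc; apply snorm_scale => // i; rewrite /vscale Rabs_mult Rabs_right; lra.
Qed.

Lemma ergo_tail {n m} (f : Vec n -> Vec m -> Vec n) (fbar : Vec n -> Vec n) (Yw : nat -> Vec m)
  z B (HB : forall y, vnorm (f z y) <= B) (Hc : vconv (ergavg f Yw z) (fbar z)) W phi :
  0 < W -> 0 < phi ->
  exists e1, 0 < e1 /\ forall eps, 0 < eps < e1 -> forall N, INR N * eps <= W ->
    snorm (vscale eps (vsum (fun k => vsub (f z (Yw (k + 1)%N)) (fbar z)) N)) <= phi.
Proof.
move=> hW hphi.
set C := INR n * Rmax 0 B + snorm (fbar z).
have hC : 0 <= C.
  have := pos_INR n; have := Rmax_l 0 B; have := snorm_ge0 (fbar z); rewrite /C; nra.
have hg : forall k, snorm (vsub (f z (Yw (k + 1)%N)) (fbar z)) <= C.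
  move=> k; apply: Rle_trans (snorm_sub_le _ _) _.
  have := snorm_le_vnorm (f z (Yw (k + 1)%N)); have := HB (Yw (k + 1)%N).
  have := Rmax_r 0 B; have := pos_INR n; rewrite /C; nra.
have [N0 HN0] := vconv_snorm _ _ Hc (phi / W) (Rdiv_lt_0_compat _ _ hphi hW).
have hN0 : 0 < INR N0.+1 by apply lt_0_INR; lia.
exists (phi / (INR N0.+1 * (C + 1))); split.
  apply Rdiv_lt_0_compat => //; nra.
move=> eps [he1 he2] N hN.
set g := (fun k => vsub (f z (Yw (k + 1)%N)) (fbar z)).
apply: Rle_trans (snorm_vscale _ _ (Rlt_le _ _ he1)) _.
case: (leqP N N0) => hNN.
  have h1 := vsum_bound g N C (fun k _ => hg k).
  have h2 : INR N <= INR N0.+1 by apply le_INR; apply/leP; exact: leqW hNN.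
  have h3 : eps * (INR N0.+1 * (C + 1)) < phi.
    have := Rmult_lt_compat_r (INR N0.+1 * (C + 1)) _ _ ltac:(nra) he2.
    have -> : phi / (INR N0.+1 * (C + 1)) * (INR N0.+1 * (C + 1)) = phi by field; nra.
    done.
  have h4 : INR N * C <= INR N0.+1 * (C + 1) by have := pos_INR N; nra.
  have : eps * snorm (vsum g N) <= eps * (INR N0.+1 * (C + 1)).
    apply Rmult_le_compat_l; lra.
  lra.
case: N hN hNN => [|N'] hN hNN; first by [].
have hN' : (N0 <= N')%N by [].
have hE := HN0 N' hN'.
have hpos : 0 < INR (N' + 1) by apply lt_0_INR; rewrite addn1; lia.
have key : snorm (vsum g N'.+1) <= INR N'.+1 * snorm (vsub (ergavg f Yw z N') (fbar z)).
  apply snorm_scale; last by apply pos_INR.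
  move=> i; rewrite /g vsum_const_coord /ergavg /vsub /vscale.
  have -> : (N' + 1)%N = N'.+1 by rewrite addn1.
  have -> : vsum (fun k => f z (Yw (k + 1)%N)) N'.+1 i - INR N'.+1 * fbar z i =
     INR N'.+1 * (/ INR N'.+1 * vsum (fun k => f z (Yw (k + 1)%N)) N'.+1 i - fbar z i).
    field; rewrite -addn1; lra.
  rewrite Rabs_mult Rabs_right; [lra| apply Rle_ge, pos_INR].
have : eps * snorm (vsum g N'.+1) <= eps * (INR N'.+1 * (phi / W)).
  apply Rmult_le_compat_l; first lra.
  apply: Rle_trans key _; apply Rmult_le_compat_l; [apply pos_INR| done].
have : eps * (INR N'.+1 * (phi / W)) <= phi.
  have -> : eps * (INR N'.+1 * (phi / W)) = (INR N'.+1 * eps) * (phi / W) by ring.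
  apply Rle_trans with (W * (phi / W)); last by right; field; lra.
  apply Rmult_le_compat_r; last done.
  apply Rlt_le, Rdiv_lt_0_compat => //.
lra.
Qed.

Lemma snorm_self {n} (v : Vec n) : snorm (vsub v v) <= 0.
Proof.
have := @snorm_bound n (vsub v v) 0; rewrite Rmult_0_r; apply => i.
rewrite /vsub Rminus_diag Rabs_R0; lra.
Qed.

Lemma G_bound {n} (g : nat -> nat -> Vec n) (jf : nat -> nat) eps T phi Jn :
  0 < eps -> 0 <= phi ->
  (forall k, INR k.+1 * eps <= T -> (jf k <= jf k.+1)%N) ->
  (forall k, INR k * eps <= T -> (jf k <= Jn)%N) ->
  (forall j N, (j <= Jn)%N -> INR N * eps <= T + eps ->
     snorm (vscale eps (vsum (g j) N)) <= phi) ->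
  forall k, INR k * eps <= T ->
    snorm (vscale eps (vsum (fun i => g (jf i) i) k)) <= phi * (2 * INR (jf k) + 1).
Proof.
move=> he hphi Hmono HJ Hphi.
set G' := (fun i => g (jf i) i).
have Hk : forall k, INR k * eps <= T ->
  snorm (vsub (vscale eps (vsum G' k)) (vscale eps (vsum (g (jf k)) k))) <= 2 * phi * INR (jf k).
  elim=> [|k IH] hk.
    have := @snorm_bound n (vsub (vscale eps (vsum G' 0)) (vscale eps (vsum (g (jf 0%N)) 0))) 0.
    rewrite Rmult_0_r => h; apply: Rle_trans (h _) _.
      move=> i; rewrite /vsub /vscale /= /vzero Rminus_diag Rabs_R0; lra.
    have := pos_INR (jf 0%N); nra.
  have hk' : INR k * eps <= T by rewrite S_INR in hk; nra.
  have IH' := IH hk'.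
  set A := vscale eps (vsum G' k).
  set Bk := vscale eps (vsum (g (jf k)) k).
  set D2 := vscale eps (vsum (g (jf k)) k.+1).
  set D3 := vscale eps (vsum (g (jf k.+1)) k.+1).
  have IH2 : snorm (vsub A Bk) <= 2 * phi * INR (jf k) := IH'.
  have tri : snorm (vsub (vscale eps (vsum G' k.+1)) D3) <= snorm (vsub A Bk) + snorm (vsub D2 D3).
    apply snorm_tri => i.
    have -> : vsub (vscale eps (vsum G' k.+1)) D3 i = vsub A Bk i + vsub D2 D3 i.
      rewrite /vsub /D2 /D3 /A /Bk /vscale !vsum_coord /G'; ring.
    exact: Rabs_triang.
  have hm := Hmono k hk.
  case: (eqVneq (jf k.+1) (jf k)) => heq.
    have : snorm (vsub D2 D3) <= 0 by rewrite /D3 heq; apply snorm_self.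
    rewrite heq; lra.
  have hlt : (jf k < jf k.+1)%N by rewrite ltn_neqAle eq_sym heq hm.
  have hINR : INR (jf k) + 1 <= INR (jf k.+1).
    rewrite -S_INR; apply le_INR; apply/leP; done.
  have hT : INR k.+1 * eps <= T + eps by lra.
  have e2 : snorm D2 <= phi by apply Hphi => //; apply HJ.
  have e3 : snorm D3 <= phi by apply Hphi => //; apply HJ.
  have := snorm_sub_le D2 D3.
  have : 2 * phi * INR (jf k) + 2 * phi <= 2 * phi * INR (jf k.+1) by nra.
  lra.
move=> k hk.
have hT : INR k * eps <= T + eps by lra.
have e1 : snorm (vscale eps (vsum (g (jf k)) k)) <= phi by apply Hphi => //; apply HJ.
have := Hk k hk.
have : snorm (vscale eps (vsum G' k)) <=
  snorm (vsub (vscale eps (vsum G' k)) (vscale eps (vsum (g (jf k)) k))) +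
  snorm (vscale eps (vsum (g (jf k)) k)).
  apply snorm_tri => i; rewrite /vsub.
  have := Rabs_triang (vscale eps (vsum G' k) i - vscale eps (vsum (g (jf k)) k) i)
             (vscale eps (vsum (g (jf k)) k) i).
  by rewrite Rplus_comm Rplus_minus.
lra.
Qed.

Lemma pow_le_exp a k : 0 <= a -> (1 + a) ^ k <= exp (a * INR k).
Proof.
move=> ha; elim: k => [|k IH]; first by rewrite /= Rmult_0_r exp_0; lra.
have h1 : 1 + a <= exp a.
  case: (Req_dec a 0) => [->|hne]; first by rewrite exp_0; lra.
  have := exp_ineq1 a hne; lra.
rewrite S_INR Rmult_plus_distr_l Rmult_1_r exp_plus /=.
rewrite (Rmult_comm (exp _)); apply Rmult_le_compat => //; try lra.
apply pow_le; lra.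
Qed.

Lemma gronwall_sc (w dd gg : nat -> R) eps L T Gb c E :
  0 < eps -> 0 < L -> 0 <= Gb -> 0 <= c -> 0 <= T ->
  w 0%N <= 0 -> (forall k, INR k * eps <= T -> gg k <= Gb) ->
  (forall k, dd k <= w k + gg k) ->
  (forall k, INR k.+1 * eps <= T -> dd k <= 1 ->
      w k.+1 <= w k + eps * L * dd k + eps * c) ->
  (forall k, INR k * eps <= T -> (1 + eps * L) ^ k <= E) ->
  T * (L * Gb + c) * E + Gb <= 1 ->
  forall k, INR k * eps <= T -> w k <= INR k * eps * (L * Gb + c) * (1 + eps * L) ^ k.
Proof.
move=> he hL hG hc hT h0 Hg Hd Hstep HE Hsmall.
set D := L * Gb + c.
have hD : 0 <= D by rewrite /D; nra.
have Hs : T * D * E + Gb <= 1 := Hsmall.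
elim=> [|k IH] hk; first by rewrite /= Rmult_0_l; lra.
have hk' : INR k * eps <= T by rewrite S_INR in hk; nra.
have IH' := IH hk'.
set P := (1 + eps * L) ^ k.
have hP1 : 1 <= P by apply pow_R1_Rle; nra.
have hPE : P <= E := HE k hk'.
have hkpos := pos_INR k.
have IH2 : w k <= INR k * eps * D * P := IH'.
have hdd : dd k <= 1.
  have a1 : INR k * eps * D * P <= T * D * E.
    have b1 : INR k * eps * D <= T * D by apply Rmult_le_compat_r; nra.
    have b2 : 0 <= INR k * eps * D by apply Rmult_le_pos; [apply Rmult_le_pos|]; lra.
    apply Rmult_le_compat; lra.
  have := Hd k; have := Hg k hk'; lra.
have st := Hstep k hk hdd.
have hw : w k.+1 <= (1 + eps * L) * w k + eps * D.
  have : eps * L * dd k <= eps * L * (w k + Gb).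
    apply Rmult_le_compat_l; [nra| have := Hd k; have := Hg k hk'; lra].
  rewrite /D; nra.
have e1 : (1 + eps * L) * w k <= (1 + eps * L) * (INR k * eps * D * P).
  apply Rmult_le_compat_l; nra.
have e2 : eps * D <= eps * D * ((1 + eps * L) * P).
  have q1 : 1 <= (1 + eps * L) * P.
    have : 1 * 1 <= (1 + eps * L) * P by apply Rmult_le_compat; nra.
    lra.
  have q2 : 0 <= eps * D by apply Rmult_le_pos; lra.
  have := Rmult_le_compat_l _ _ _ q2 q1; lra.
have -> : (1 + eps * L) ^ k.+1 = (1 + eps * L) * P by [].
rewrite S_INR.
have -> : (INR k + 1) * eps * D * ((1 + eps * L) * P) =
   (1 + eps * L) * (INR k * eps * D * P) + eps * D * ((1 + eps * L) * P) by ring.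
lra.
Qed.

Lemma abs_lo x : - Rabs x <= x.
Proof. have := Rle_abs (- x); rewrite Rabs_Ropp; lra. Qed.

Lemma snorm5 {n} (u a b c d e : Vec n) :
  (forall i, u i = a i + b i + c i - d i - e i) ->
  snorm u <= snorm a + snorm b + snorm c + snorm d + snorm e.
Proof.
move=> H; rewrite /snorm /sl; elim: (enum 'I_n) => [|i l IH] /=; first lra.
rewrite H.
have h1 := Rle_abs (a i); have h2 := Rle_abs (b i); have h3 := Rle_abs (c i);
have h4 := Rle_abs (d i); have h5 := Rle_abs (e i).
have h6 := abs_lo (a i); have h7 := abs_lo (b i); have h8 := abs_lo (c i);
have h9 := abs_lo (d i); have h10 := abs_lo (e i).
have : Rabs (a i + b i + c i - d i - e i) <=
  Rabs (a i) + Rabs (b i) + Rabs (c i) + Rabs (d i) + Rabs (e i).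
  apply Rabs_le; split; lra.
lra.
Qed.

Lemma snorm_le_sub {n} (a b : Vec n) : snorm a <= snorm (vsub a b) + snorm b.
Proof.
apply snorm_tri => i; rewrite /vsub.
have := Rabs_triang (a i - b i) (b i); by rewrite Rplus_comm Rplus_minus.
Qed.

Lemma exp_le x y : x <= y -> exp x <= exp y.
Proof.
move=> h; case: (Rle_lt_or_eq_dec _ _ h) => [h'|->]; last lra.
exact: Rlt_le (exp_increasing _ _ h').
Qed.

Theorem lemma1
  (Omega : Type) (null : (Omega -> Prop) -> Prop) (Hnull : null_ideal null)
  (n m : nat) (eps0 : R) (Heps0 : 0 < eps0)
  (f : Vec n -> Vec m -> Vec n) (SY : Vec m -> Prop)
  (Y : Omega -> nat -> Vec m) (fbar : Vec n -> Vec n)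
  (x : Vec n) (Xc : R -> Vec n)
  (HY : forall w k, SY (Y w k))
  (Hcont : forall (x0 : Vec n) (y0 : Vec m) (e : R), 0 < e ->
     exists d, 0 < d /\ forall (x1 : Vec n) (y1 : Vec m),
       vnorm (vsub x1 x0) < d -> vnorm (vsub y1 y0) < d ->
       vnorm (vsub (f x1 y1) (f x0 y0)) < e)
  (Hbdd : forall x0 : Vec n, exists B, forall y : Vec m, vnorm (f x0 y) <= B)
  (Hlip : forall r, exists kD, forall (x1 x2 : Vec n) (y : Vec m),
     vnorm x1 <= r -> vnorm x2 <= r -> SY y ->
     vnorm (vsub (f x1 y) (f x2 y)) <= kD * vnorm (vsub x1 x2))
  (Herg : forall x0 : Vec n,
     almost_surely null (fun w => vconv (ergavg f (Y w) x0) (fbar x0)))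
  (HXc0 : Xc 0 = x)
  (HXc0cont : forall e, 0 < e -> exists d, 0 < d /\
     forall t, 0 <= t < d -> vnorm (vsub (Xc t) x) < e)
  (HXcder : forall t, 0 < t -> forall i : 'I_n,
     derivable_pt_lim (fun s => Xc s i) t (fbar (Xc t) i)) :
  forall T, 0 < T ->
  almost_surely null (fun w =>
    forall eta, 0 < eta -> exists delta, 0 < delta /\
      forall eps, 0 < eps < eps0 -> eps < delta ->
        forall t, 0 <= t <= T ->
          vnorm (vsub (Xcont f (Y w) eps x t) (Xc t)) <= eta).
Proof.
have Hrc := xc_rcont fbar x Xc HXc0 HXc0cont HXcder.
move=> T hT.
have [R0 [hR0 HR0]] := xc_bounded Xc Hrc (T + 1) ltac:(lra).
set Rr := R0 + 1.
have [L [hL HLf]] := lip_f f SY Hlip Rr.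
have HLfb : forall z1 z2, snorm z1 <= Rr -> snorm z2 <= Rr ->
    snorm (vsub (fbar z1) (fbar z2)) <= L * snorm (vsub z1 z2).
  move=> z1 z2 h1 h2; apply (lip_fbar null Hnull f SY Y fbar HY Herg) => y hy; exact: HLf.
set Fb := snorm (fbar vzero) + L * Rr.
have HFb : forall c, 0 < c <= T + 1 -> snorm (fbar (Xc c)) <= Fb.
  move=> c hc.
  have h1 := HR0 c ltac:(lra).
  have h2 := HLfb (Xc c) vzero ltac:(rewrite /Rr; lra) ltac:(rewrite snorm_zero /Rr; lra).
  have h3 := snorm_le_sub (fbar (Xc c)) (fbar vzero).
  have h4 := snorm_sub_le (Xc c) vzero; rewrite snorm_zero in h4.
  have : L * snorm (vsub (Xc c) vzero) <= L * Rr by apply Rmult_le_compat_l; rewrite /Rr; lra.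
  rewrite /Fb; lra.
set K := INR n * Fb.
have hFb : 0 <= Fb.
  have := HFb 1 ltac:(lra); have := snorm_ge0 (fbar (Xc 1)); lra.
have hK : 0 <= K by apply Rmult_le_pos; [apply pos_INR|].
have HK : forall s t, 0 <= s -> s <= t -> t <= T + 1 ->
    snorm (vsub (Xc t) (Xc s)) <= K * (t - s) := xc_lip fbar Xc Hrc HXcder (T + 1) Fb HFb.
have Hth : forall s h, 0 <= s -> 0 < h -> s + h <= T + 1 ->
    snorm (vsub (vsub (Xc (s + h)) (Xc s)) (vscale h (fbar (Xc s)))) <= INR n * (L * K * h) * h.
  move=> s h hs hh hsh; rewrite Rmult_assoc.
  apply (xc_step fbar Xc Hrc HXcder s h (L * K * h) hs hh) => c hc.
  have q1 := HR0 c ltac:(lra); have q2 := HR0 s ltac:(lra).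
  have q3 := HLfb (Xc c) (Xc s) ltac:(rewrite /Rr; lra) ltac:(rewrite /Rr; lra).
  apply: Rle_trans q3 _.
  rewrite Rmult_assoc; apply Rmult_le_compat_l; first lra.
  apply: Rle_trans (HK s c ltac:(lra) ltac:(lra) ltac:(lra)) _.
  apply Rmult_le_compat_l; lra.
pose z (M j : nat) := Xc (INR j / INR M.+1).
have [Hsub [Hun _]] := Hnull.
have nullMj : forall M j, null (fun w => ~ vconv (ergavg f (Y w) (z M j)) (fbar (z M j))).
  move=> M j; have [N [hN HN]] := Herg (z M j).
  apply (Hsub _ N hN) => w hw; apply NNPP => hn; exact: hw (HN w hn).
exists (fun w => exists M, exists j, ~ vconv (ergavg f (Y w) (z M j)) (fbar (z M j))).
split.
  apply Hun => M; apply Hun => j; exact: nullMj.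
move=> w hw.
have Hcv : forall M j, vconv (ergavg f (Y w) (z M j)) (fbar (z M j)).
  move=> M j; apply NNPP => hn; apply hw; by exists M, j.
move=> eta heta.
set tau := Rmin 1 (eta / 2).
have htau : 0 < tau by apply Rmin_pos; lra.
have htau1 : tau <= 1 := Rmin_l 1 (eta / 2).
have htau2 : tau <= eta / 2 := Rmin_r 1 (eta / 2).
set E := exp (L * T).
have hE : 0 < E by apply exp_pos.
have HE : forall eps k, 0 < eps -> INR k * eps <= T -> (1 + eps * L) ^ k <= E.
  move=> eps k he hk; apply: Rle_trans (pow_le_exp (eps * L) k ltac:(nra)) _.
  apply exp_le; have := pos_INR k; nra.
set A0 := T * E * L + 1.
have hTEL : 0 < T * E * L by apply Rmult_lt_0_compat; nra.
have hA0 : 0 < A0 by rewrite /A0; lra.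
set M := fl (6 * T * E * L * K / tau).
have hM : 6 * T * E * L * K / tau < INR M.+1.
  have hpos : 0 <= 6 * T * E * L * K / tau.
    apply Rmult_le_pos; last by apply Rlt_le, Rinv_0_lt_compat.
    nra.
  have := fl_spec _ hpos; rewrite S_INR /M; lra.
have hMpos : 0 < INR M.+1 by apply lt_0_INR; lia.
set Delta := / INR M.+1.
have hDelta : 0 < Delta by apply Rinv_0_lt_compat.
have hMD : 2 * T * E * L * K * Delta <= tau / 3.
  have : 6 * T * E * L * K < tau * INR M.+1.
    have := Rmult_lt_compat_r tau _ _ htau hM.
    have -> : 6 * T * E * L * K / tau * tau = 6 * T * E * L * K by field; lra.
    lra.
  move=> h; rewrite /Delta.
  apply (Rmult_le_reg_r (3 * INR M.+1)); first lra.
  have -> : 2 * T * E * L * K * / INR M.+1 * (3 * INR M.+1) = 6 * T * E * L * K by field; lra.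
  have -> : tau / 3 * (3 * INR M.+1) = tau * INR M.+1 by field.
  lra.
set Jn := fl (T * INR M.+1).
have hJn := pos_INR Jn.
set phi := tau / (3 * A0 * (2 * INR Jn + 1)).
have hphi : 0 < phi by apply Rdiv_lt_0_compat => //; nra.
pose P (j : nat) (d : R) := forall eps, 0 < eps < d -> forall N, INR N * eps <= T + eps0 ->
  snorm (vscale eps (vsum (fun k => vsub (f (z M j) (Y w (k + 1)%N)) (fbar (z M j))) N)) <= phi.
have Hj : forall j, exists d, 0 < d /\ P j d.
  move=> j; have [B HB] := Hbdd (z M j).
  exact: (ergo_tail f fbar (Y w) (z M j) B HB (Hcv M j) (T + eps0) phi ltac:(lra) hphi).
have [d1 [hd1 Hd1]] := fin_min P
  (fun j d d' H hd eps he => H eps ltac:(lra)) Hj Jn.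
set C3 := T * E * INR n * L * K + 1.
have hC3 : 0 < C3.
  have hh : 0 <= T * E * INR n * L * K.
    have h1 := pos_INR n; have h2 : 0 <= T * E by nra.
    have h3 : 0 <= T * E * INR n by nra.
    have h4 : 0 <= T * E * INR n * L by nra.
    nra.
  rewrite /C3; lra.
set delta := Rmin (Rmin d1 (tau / (3 * C3))) (eta / (2 * (K + 1))).
exists delta; split.
  apply Rmin_pos; [apply Rmin_pos => //|]; apply Rdiv_lt_0_compat; lra.
move=> eps [he he0] hed t [ht0 htT].
rewrite /delta in hed.
have hd1e : eps < d1 by have := Rmin_l (Rmin d1 (tau / (3 * C3))) (eta / (2 * (K + 1)));
  have := Rmin_l d1 (tau / (3 * C3)); lra.
have hC3e : eps < tau / (3 * C3) by have := Rmin_l (Rmin d1 (tau / (3 * C3))) (eta / (2 * (K + 1)));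
  have := Rmin_r d1 (tau / (3 * C3)); lra.
have hKe : eps < eta / (2 * (K + 1)) by have := Rmin_r (Rmin d1 (tau / (3 * C3))) (eta / (2 * (K + 1))); lra.
pose Xk k := Xseq f (Y w) eps x k.
pose dk k := vsub (Xk k) (Xc (INR k * eps)).
pose jf k := fl (INR k * eps * INR M.+1).
pose g j i := vsub (f (z M j) (Y w (i + 1)%N)) (fbar (z M j)).
pose Gv k := vscale eps (vsum (fun i => g (jf i) i) k).
pose Wv k := vsub (dk k) (Gv k).
set Gb := phi * (2 * INR Jn + 1).
have hGb : 0 <= Gb by rewrite /Gb; nra.
set c := 2 * L * K * Delta + INR n * L * K * eps.
have hc : 0 <= c.
  have h1 := pos_INR n; have h2 : 0 <= L * K by nra.
  have h3 : 0 <= INR n * L * K by nra.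
  have h4 : 0 <= INR n * L * K * eps by nra.
  have h5 : 0 <= 2 * L * K * Delta by nra.
  rewrite /c; lra.
have hjf_mono : forall k, INR k.+1 * eps <= T -> (jf k <= jf k.+1)%N.
  move=> k hk; apply fl_mono.
    apply Rmult_le_pos; [apply Rmult_le_pos; [apply pos_INR|lra]|lra].
  apply Rmult_le_compat_r; [lra|]; apply Rmult_le_compat_r; [lra|]; apply le_INR; lia.
have hjf_J : forall k, INR k * eps <= T -> (jf k <= Jn)%N.
  move=> k hk; apply fl_mono.
    apply Rmult_le_pos; [apply Rmult_le_pos; [apply pos_INR|lra]|lra].
  apply Rmult_le_compat_r; lra.
have HGv : forall k, INR k * eps <= T -> snorm (Gv k) <= Gb.
  move=> k hk.
  have Hphi : forall j N, (j <= Jn)%N -> INR N * eps <= T + eps ->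
     snorm (vscale eps (vsum (g j) N)) <= phi.
    move=> j N hj hN; apply (Hd1 j hj eps (conj he hd1e) N); lra.
  have h := G_bound g jf eps T phi Jn he (Rlt_le _ _ hphi) hjf_mono hjf_J Hphi k hk.
  have hle : INR (jf k) <= INR Jn by apply le_INR; apply/leP; apply hjf_J.
  apply: Rle_trans h _; rewrite /Gb; nra.
have Hstep : forall k, INR k.+1 * eps <= T -> snorm (dk k) <= 1 ->
   snorm (Wv k.+1) <= snorm (Wv k) + eps * L * snorm (dk k) + eps * c.
  move=> k hk hd.
  set tk := INR k * eps.
  have htk : INR k.+1 * eps = tk + eps by rewrite S_INR /tk; ring.
  have htk0 : 0 <= tk by have := pos_INR k; rewrite /tk; nra.
  have hfl : INR (jf k) <= tk * INR M.+1 < INR (jf k) + 1.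
    apply fl_spec; apply Rmult_le_pos; lra.
  set sj := INR (jf k) / INR M.+1.
  have hsj1 : sj <= tk.
    rewrite /sj; apply (Rmult_le_reg_r (INR M.+1)) => //.
    have -> : INR (jf k) / INR M.+1 * INR M.+1 = INR (jf k) by field; lra.
    lra.
  have hsj2 : tk - sj <= Delta.
    rewrite /sj /Delta; apply (Rmult_le_reg_r (INR M.+1)) => //.
    have -> : (tk - INR (jf k) / INR M.+1) * INR M.+1 = tk * INR M.+1 - INR (jf k) by field; lra.
    have -> : / INR M.+1 * INR M.+1 = 1 by field; lra.
    lra.
  have hsj0 : 0 <= sj by rewrite /sj; apply Rmult_le_pos; [apply pos_INR| apply Rlt_le, Rinv_0_lt_compat].
  have hXck : snorm (Xc tk) <= R0 by apply HR0; lra.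
  have hzj : snorm (z M (jf k)) <= R0 by apply HR0; rewrite -/sj; lra.
  have hdk : dk k = vsub (Xk k) (Xc tk) by [].
  have hXk : snorm (Xk k) <= Rr.
    have := snorm_le_sub (Xk k) (Xc tk); rewrite -hdk /Rr; lra.
  set Yk := Y w (k + 1)%N.
  have hY : SY Yk := HY w _.
  have e5 := snorm5 (Wv k.+1) (Wv k)
    (vscale eps (vsub (f (Xk k) Yk) (f (Xc tk) Yk)))
    (vscale eps (vsub (f (Xc tk) Yk) (f (z M (jf k)) Yk)))
    (vscale eps (vsub (fbar (Xc tk)) (fbar (z M (jf k)))))
    (vsub (vsub (Xc (tk + eps)) (Xc tk)) (vscale eps (fbar (Xc tk)))).
  have hid : forall i, Wv k.+1 i = Wv k i
    + vscale eps (vsub (f (Xk k) Yk) (f (Xc tk) Yk)) i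
    + vscale eps (vsub (f (Xc tk) Yk) (f (z M (jf k)) Yk)) i
    - vscale eps (vsub (fbar (Xc tk)) (fbar (z M (jf k)))) i
    - vsub (vsub (Xc (tk + eps)) (Xc tk)) (vscale eps (fbar (Xc tk))) i.
    move=> i; rewrite /Wv /dk /Gv htk /Xk /= /Yk /vsub /vadd /vscale addn1 /=.
    rewrite -/tk /g /vsub addn1; ring.
  have ee := e5 hid.
  have b1 : snorm (vscale eps (vsub (f (Xk k) Yk) (f (Xc tk) Yk))) <= eps * (L * snorm (dk k)).
    apply: Rle_trans (snorm_vscale _ _ (Rlt_le _ _ he)) _.
    apply Rmult_le_compat_l; first lra.
    rewrite hdk; apply HLf => //; rewrite /Rr; lra.
  have hXz : snorm (vsub (Xc tk) (z M (jf k))) <= K * Delta.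
    apply: Rle_trans (HK sj tk hsj0 hsj1 ltac:(lra)) _.
    apply Rmult_le_compat_l; lra.
  have hzn : 0 <= snorm (vsub (Xc tk) (z M (jf k))) := snorm_ge0 _.
  have b2 : snorm (vscale eps (vsub (f (Xc tk) Yk) (f (z M (jf k)) Yk))) <= eps * (L * (K * Delta)).
    apply: Rle_trans (snorm_vscale _ _ (Rlt_le _ _ he)) _.
    apply Rmult_le_compat_l; first lra.
    apply: Rle_trans (HLf (Xc tk) (z M (jf k)) Yk ltac:(rewrite /Rr; lra) ltac:(rewrite /Rr; lra) hY) _.
    apply Rmult_le_compat_l; lra.
  have b3 : snorm (vscale eps (vsub (fbar (Xc tk)) (fbar (z M (jf k))))) <= eps * (L * (K * Delta)).
    apply: Rle_trans (snorm_vscale _ _ (Rlt_le _ _ he)) _.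
    apply Rmult_le_compat_l; first lra.
    apply: Rle_trans (HLfb (Xc tk) (z M (jf k)) ltac:(rewrite /Rr; lra) ltac:(rewrite /Rr; lra)) _.
    apply Rmult_le_compat_l; lra.
  have b4 := Hth tk eps htk0 he ltac:(lra).
  have -> : eps * c = eps * (L * (K * Delta)) + eps * (L * (K * Delta)) + INR n * (L * K * eps) * eps
    by rewrite /c; ring.
  lra.
have Hw0 : snorm (Wv 0%N) <= 0.
  have := @snorm_bound n (Wv 0%N) 0; rewrite Rmult_0_r; apply => i.
  rewrite /Wv /dk /Gv /Xk /= /vsub /vscale /vzero Rmult_0_l HXc0; rewrite (_ : x i - x i - eps * 0 = 0); [rewrite Rabs_R0; lra| ring].
have Hd : forall k, snorm (dk k) <= snorm (Wv k) + snorm (Gv k).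
  move=> k; apply snorm_tri => i; rewrite /Wv /vsub.
  have := Rabs_triang (dk k i - Gv k i) (Gv k i); by rewrite Rplus_comm Rplus_minus.
have Hsm : T * (L * Gb + c) * E + Gb <= tau.
  have q1 : T * L * Gb * E + Gb = tau / 3.
    rewrite /Gb /phi /A0; field; split; lra.
  have q2 : T * (2 * L * K * Delta) * E <= tau / 3 by nra.
  have q3 : T * (INR n * L * K * eps) * E <= tau / 3.
    have : 3 * C3 * eps < tau.
      have := Rmult_lt_compat_l (3 * C3) _ _ ltac:(lra) hC3e.
      have -> : 3 * C3 * (tau / (3 * C3)) = tau by field; lra.
      done.
    have -> : T * (INR n * L * K * eps) * E = (T * E * INR n * L * K) * eps by ring.
    rewrite /C3 in hC3 *; nra.
  have -> : T * (L * Gb + c) * E + Gb = (T * L * Gb * E + Gb) + T * (2 * L * K * Delta) * E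
     + T * (INR n * L * K * eps) * E by rewrite /c; ring.
  lra.
have HG := gronwall_sc (fun k => snorm (Wv k)) (fun k => snorm (dk k)) (fun k => snorm (Gv k))
  eps L T Gb c E he hL hGb hc ltac:(lra) Hw0 HGv Hd Hstep (fun k hk => HE eps k he hk) ltac:(lra).
have Hdk : forall k, INR k * eps <= T -> snorm (dk k) <= tau.
  move=> k hk; have h1 := HG k hk; have h2 := Hd k; have h3 := HGv k hk.
  have h4 := HE eps k he hk.
  have hD : 0 <= L * Gb + c by nra.
  have h5 : INR k * eps * (L * Gb + c) * (1 + eps * L) ^ k <= T * (L * Gb + c) * E.
    have p1 : 0 <= INR k * eps by have := pos_INR k; nra.
    have p2 : 0 <= INR k * eps * (L * Gb + c) by apply Rmult_le_pos.
    have p3 : INR k * eps * (L * Gb + c) <= T * (L * Gb + c) by apply Rmult_le_compat_r.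
    have p4 : 0 <= (1 + eps * L) ^ k by apply pow_le; nra.
    apply Rmult_le_compat; lra.
  simpl in h1; lra.
have hte : 0 <= t / eps by apply Rmult_le_pos; [lra| apply Rlt_le, Rinv_0_lt_compat].
have [hk1 hk2] := fl_spec (t / eps) hte.
set k0 := fl (t / eps).
rewrite -/k0 in hk1 hk2.
have hk0a : INR k0 * eps <= t.
  have := Rmult_le_compat_r eps _ _ (Rlt_le _ _ he) hk1.
  have -> : t / eps * eps = t by field; lra.
  done.
have hk0b : t < INR k0 * eps + eps.
  have := Rmult_lt_compat_r eps _ _ he hk2.
  have -> : t / eps * eps = t by field; lra.
  move=> h; rewrite Rmult_plus_distr_r Rmult_1_l in h; lra.
have hk0T : INR k0 * eps <= T by lra.
have hk00 : 0 <= INR k0 * eps by have := pos_INR k0; nra.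
rewrite /Xcont -/(fl (t / eps)) -/k0.
apply: Rle_trans (vnorm_le_snorm _) _.
have t1 := snorm_sub_tri (Xseq f (Y w) eps x k0) (Xc (INR k0 * eps)) (Xc t).
have t2 : snorm (vsub (Xseq f (Y w) eps x k0) (Xc (INR k0 * eps))) <= tau := Hdk k0 hk0T.
have t3 := HK (INR k0 * eps) t hk00 hk0a ltac:(lra).
rewrite snorm_sub_sym in t3.
have t4 : K * (t - INR k0 * eps) <= K * eps by apply Rmult_le_compat_l; lra.
have t5 : K * eps <= eta / 2.
  have := Rmult_lt_compat_l (2 * (K + 1)) _ _ ltac:(lra) hKe.
  have -> : 2 * (K + 1) * (eta / (2 * (K + 1))) = eta by field; lra.
  nra.
lra.
Qed.
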